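(* Let $d\ge1$, $\alpha>1$ and $p\in(0,1]$. For every $\zeta>0$ there exist $\theta\in(0,\zeta)$ and $N=N(\theta)\in\mathbb{N}$ such that for every $n>N$, every realization of $\omega_p$, every minimizing path $\pi_n$ for $T_n(\bar\omega_p)$ (with $\bar\omega_p$ built using this $\theta$ and $n$), and every $1\le i\le n$, \[\Delta\pi_n(i)\le n^{\zeta}.\]
   Context: Let $\{\eta(j,x)\}_{(j,x)\in\mathbb{N}\times\mathbb{Z}^d}$ be i.i.d. Bernoulli under $Q$ with $Q(\eta(0,0)=1)=p$. For $p\in(0,1)$ set $s_p=(\log\frac1p)^{1/d}$ and $\omega_p=\sum_{(k,x)\in\mathbb{N}\times\mathbb{Z}^d}(1-\eta(k,x))\delta_{(k,s_px)}$; $\omega_1$ is a Poisson point process on $\mathbb{N}\times\mathbb{R}^d$ with intensity counting measure $\times$ Lebesgue measure. Point measures are identified with their supports. Given $\theta>0$ and $n$, define \[\bar\omega_p=\omega_p+\sum_{(k,x)\in\mathbb{N}\times n^\theta\mathbb{Z}^d}1_{\{\omega_p(\{k\}\times(x+[0,n^\theta)^d))=0\}}\delta_{(k,x)}.\] For a configuration $\omega$, with $|x|_1=\sum_i|x_i|$, $T_n(\omega)=\min\{\sum_{k=1}^n|x_{k-1}-x_k|_1^\alpha:\ x_0=0,\ \{(k,x_k)\}_{k=1}^n\subset\omega\}$, and a minimizing path is a sequence $\pi_n=(\pi_n(1),\dots,\pi_n(n))$ attaining this minimum. With $\pi_n(0)=0$, $\Delta\pi_n(i)=|\pi_n(i)-\pi_n(i-1)|_1$.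 *)

(* Defs.v *)
From HB Require Import structures.
From mathcomp Require Import all_boot all_order all_algebra.
From mathcomp Require Import all_classical all_reals all_analysis.
Set Implicit Arguments. Unset Strict Implicit. Unset Printing Implicit Defensive.
Import Order.TTheory GRing.Theory Num.Theory.
Local Open Scope ring_scope.
Local Open Scope classical_set_scope.

Section Defs.
Variables (R : realType) (d : nat).

Definition pt := 'I_d -> R.
Definition pt0 : pt := fun _ => 0.
Definition l1 (x : pt) : R := \sum_(i < d) `|x i|.
(* configurations = supports of point measures on N x R^d *)
Definition config := set (nat * pt).

Definition s_p (p : R) : R := (ln p^-1) `^ (d%:R)^-1.

(* omega_p for a realization eta of the Bernoulli field (p < 1):
   points (k, s_p x) with eta(k,x) = 0 *)
Definition omega_of_eta (p : R) (eta : nat -> ('I_d -> int) -> bool) : config :=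
  [set kx | exists z : 'I_d -> int,
      eta kx.1 z = false /\ kx.2 = (fun i => s_p p * (z i)%:~R)].

(* realizations of a Poisson process on N x R^d (as supports): locally finite sets *)
Definition locally_finite (w : config) : Prop :=
  forall (k : nat) (r : R), finite_set [set y | w (k, y) /\ l1 y <= r].

Definition realization (p : R) (w : config) : Prop :=
  if p < 1 then exists eta, w = omega_of_eta p eta else locally_finite w.

Definition corner (L : R) (z : 'I_d -> int) : pt := fun i => L * (z i)%:~R.
Definition in_box (L : R) (z : 'I_d -> int) (y : pt) : Prop :=
  forall i, L * (z i)%:~R <= y i < L * (z i)%:~R + L.

Definition augment (L : R) (w : config) : config :=
  w `|` [set kx | exists z : 'I_d -> int, kx.2 = corner L z /\
                   ~ (exists y, w (kx.1, y) /\ in_box L z y)].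

Definition admissible (w : config) (n : nat) (x : nat -> pt) : Prop :=
  x 0%N = pt0 /\ forall k, (1 <= k <= n)%N -> w (k, x k).

Definition step (x : nat -> pt) (k : nat) : R := l1 (fun j => x k.-1 j - x k j).

Definition cost (alpha : R) (n : nat) (x : nat -> pt) : R :=
  \sum_(1 <= k < n.+1) (step x k) `^ alpha.

Definition minimizing (w : config) (n : nat) (alpha : R) (x : nat -> pt) : Prop :=
  admissible w n x /\
  forall y, admissible w n y -> cost alpha n x <= cost alpha n y.

End Defs.

(* Main.v *)
Require Import Defs.
From HB Require Import structures.
From mathcomp Require Import all_boot all_order all_algebra.
From mathcomp Require Import all_classical all_reals all_analysis.
From mathcomp Require Import ring lra zify.
Import Order.TTheory GRing.Theory Num.Theory.
Local Open Scope ring_scope.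
Local Open Scope classical_set_scope.

Section S.
Variable R : realType.
Implicit Types a u v : R.

Lemma mvt_pow a u v : 0 < v -> v < u ->
  exists2 c, v < c < u & u `^ a - v `^ a = a * c `^ (a - 1) * (u - v).
Proof.
move=> v0 vu.
have [] := @MVT R (fun x => x `^ a) (fun x => a * x `^ (a - 1)) v u vu.
- move=> x; rewrite in_itv /= => /andP[vx _].
  by apply: (@is_derive1_powR R a x); exact: lt_trans vx.
- apply: derivable_within_continuous => x; rewrite in_itv /= => /andP[vx _].
  have x0 : 0 < x by exact: lt_le_trans vx.
  by apply: derivable_powR; rewrite in_itv /= andbT.
- move=> c; rewrite in_itv /= => cI ->; by exists c.
Qed.


Lemma powR_mono (r x y : R) : 0 <= r -> 0 <= x -> x <= y -> x `^ r <= y `^ r.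
Proof.
move=> r0 x0 xy; apply: (ge0_ler_powR r0) => //; rewrite nnegrE //.
exact: le_trans xy.
Qed.

Lemma tangent a u v : 1 < a -> 0 <= u -> 0 <= v ->
  v `^ a + a * v `^ (a - 1) * (u - v) <= u `^ a.
Proof.
move=> a1 u0 v0.
have a0 : 0 < a by exact: lt_trans a1.
have a10 : 0 <= a - 1 by rewrite subr_ge0 ltW.
have [->|vn0] := eqVneq v 0.
  by rewrite !powR0 ?gt_eqF ?subr_gt0 // mulr0 mul0r addr0 powR_ge0.
have vp : 0 < v by rewrite lt_def vn0.
have [->|un0] := eqVneq u 0.
  rewrite powR0 ?gt_eqF // sub0r mulrN -mulrA (mulrC _ v) mulr_powRB1 //.
  have := powR_ge0 v a; move: (v `^ a) => w w0.
  nra.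
have up : 0 < u by rewrite lt_def un0.
have [uv|vu|->] := ltgtP u v; last by rewrite subrr mulr0 addr0.
- have [c /andP[uc cv] E] := @mvt_pow a v u up uv.
  have : a * c `^ (a - 1) * (v - u) <= a * v `^ (a - 1) * (v - u).
    apply: ler_wpM2r; first by rewrite subr_ge0 ltW.
    apply: ler_wpM2l; first exact: ltW.
    by apply: powR_mono => //; rewrite ltW // (lt_trans up uc).
  rewrite -E; move: (a * v `^ (a - 1)) => k.
  have -> : k * (u - v) = - (k * (v - u)) by rewrite -mulrN opprB.
  lra.
- have [c /andP[vc cu] E] := @mvt_pow a u v vp vu.
  have : a * v `^ (a - 1) * (u - v) <= a * c `^ (a - 1) * (u - v).
    apply: ler_wpM2r; first by rewrite subr_ge0 ltW.
    apply: ler_wpM2l; first exact: ltW.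
    by apply: powR_mono => //; rewrite ltW.
  rewrite -E; lra.
Qed.


Section B.
Variables (al c : R) (s : nat -> R) (i : nat).
Hypotheses (al1 : 1 < al) (c0 : 0 < c) (s0 : forall k, 0 <= s k).

Definition TT m := \sum_(i <= k < i + m) s k.
Definition QQ m := \sum_(i <= k < i + m) s k `^ al.
Definition AA m := TT m / m%:R.
Definition rho := (2 * al) `^ (al - 1)^-1.
Definition beta := 2 * al * 2 `^ (al - 1).

Lemma al0 : 0 < al. Proof. exact: lt_trans al1. Qed.

Lemma tsum lo hi v : (lo <= hi)%N -> 0 <= v ->
  (hi - lo)%:R * v `^ al + al * v `^ (al - 1) *
     (\sum_(lo <= k < hi) s k - (hi - lo)%:R * v)
  <= \sum_(lo <= k < hi) s k `^ al.
Proof.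
move=> lh v0.
apply: (@le_trans _ _ (\sum_(lo <= k < hi) (v `^ al + al * v `^ (al - 1) * (s k - v)))).
  rewrite big_split /= sumr_const_nat -mulr_sumr sumrB sumr_const_nat.
  by rewrite !mulr_natl.
by apply: ler_sum => k _; apply: tangent.
Qed.

Lemma TT_ge0 m : 0 <= TT m. Proof. by apply: sumr_ge0 => k _. Qed.
Lemma AA_ge0 m : 0 <= AA m. Proof. by rewrite divr_ge0 ?TT_ge0. Qed.

Lemma TTE m : (0 < m)%N -> TT m = m%:R * AA m.
Proof. by move=> m0; rewrite /AA mulrC divfK // pnatr_eq0 -lt0n. Qed.

Lemma jensen m : (0 < m)%N -> m%:R * AA m `^ al <= QQ m.
Proof.
move=> m0; have := @tsum i (i + m) (AA m) (leq_addr _ _) (AA_ge0 m).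
by rewrite addKn -/(TT m) -TTE // subrr mulr0 addr0.
Qed.

Lemma rho_pow : rho `^ (al - 1) = 2 * al.
Proof.
rewrite /rho -powRrM mulVf ?powRr1 //.
  by rewrite mulr_ge0 // ltW // al0.
by rewrite subr_eq0 gt_eqF.
Qed.

Lemma rho_ge1 : 1 <= rho.
Proof.
rewrite /rho -[X in X <= _](powRr0 (2 * al)); apply: ler_powR.
  by have := al1; lra.
by rewrite invr_ge0 subr_ge0 ltW.
Qed.

Lemma rel m m' : (0 < m)%N -> (m < m')%N -> c <= AA m -> rho * AA m' <= AA m ->
  QQ m' <= m'%:R * (AA m' + c) `^ al -> m%:R * AA m <= beta * c * m'%:R.
Proof.
move=> m0 mm' cA1 rA W.
have m'0 : (0 < m')%N by exact: ltn_trans mm'.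
have al10 : 0 <= al - 1 by rewrite subr_ge0 ltW.
set A1 := AA m in cA1 rA *; set A := AA m' in rA W *.
have A0 : 0 <= A by exact: AA_ge0.
have A1p : 0 < A1 by exact: lt_le_trans cA1.
have AA1 : A <= A1.
  apply: le_trans rA; rewrite -[X in X <= _]mul1r; apply: ler_wpM2r => //.
  exact: rho_ge1.
pose Qr := \sum_(i + m <= k < i + m') s k `^ al.
pose Tr := \sum_(i + m <= k < i + m') s k.
have Qs : QQ m' = QQ m + Qr.
  by rewrite /QQ /Qr -big_cat_nat ?leq_addr // leq_add2l ltnW.
have Ts : TT m' = TT m + Tr.
  by rewrite /TT /Tr -big_cat_nat ?leq_addr // leq_add2l ltnW.
have h1 := @jensen m m0; rewrite -/A1 in h1.
have lmm : (i + m <= i + m')%N by rewrite leq_add2l ltnW.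
have h2 := @tsum (i + m) (i + m') A lmm A0.
rewrite subnDl -/Qr -/Tr in h2.
have h4 : (A + c) `^ al <= A `^ al + al * c * (A + c) `^ (al - 1).
  have := @tangent al A (A + c) al1 A0 (addr_ge0 A0 (ltW c0)).
  set X := (A + c) `^ (al - 1); lra.
have h5 : 2 * al * A `^ (al - 1) <= A1 `^ (al - 1).
  have r0 : 0 <= rho by exact: le_trans rho_ge1.
  rewrite -rho_pow -powRM //.
  apply: powR_mono => //; exact: mulr_ge0.
have h6 : A1 `^ al = A1 * A1 `^ (al - 1) by rewrite mulr_powRB1 // ?ltW // al0.
have h7 : A `^ al = A * A `^ (al - 1) by rewrite mulr_powRB1 // al0.
have h8 : (A + c) `^ (al - 1) <= 2 `^ (al - 1) * A1 `^ (al - 1).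
  rewrite -powRM //; last exact: ltW.
  apply: powR_mono => //; first by rewrite addr_ge0 // ltW.
  lra.
have Tm : TT m = m%:R * A1 by rewrite (@TTE m m0).
have Tm' : TT m' = m'%:R * A by rewrite (@TTE m' m'0).
have Trv : Tr = m'%:R * A - m%:R * A1 by rewrite -Tm -Tm' Ts; ring.
rewrite natrB ?(ltnW mm') // Trv in h2.
set Z := A `^ (al - 1) in h2 h5 h7.
set U := A1 `^ (al - 1) in h5 h6 h8.
set V := (A + c) `^ (al - 1) in h4 h8.
set mm := m%:R in h1 h2 *; set nn := m'%:R in h2 W *.
have mm0 : 0 <= mm by [].
have nn0 : 0 <= nn by [].
have f1 : al * (mm * Z * A1) <= mm * A1 * U / 2.
  have := ler_wpM2r (mulr_ge0 mm0 (ltW A1p)) h5; lra.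
have f2 : 0 <= (al - 1) * (mm * A * Z).
  apply: mulr_ge0 => //; apply: mulr_ge0; [exact: mulr_ge0 | exact: powR_ge0].
have f3 : nn * c * V <= nn * c * (2 `^ (al - 1) * U).
  by apply: ler_wpM2l => //; rewrite mulr_ge0 // ltW.
have f4 : nn * (A + c) `^ al <= nn * (A `^ al + al * c * V).
  exact: ler_wpM2l.
rewrite h6 in h1; rewrite h7 in h2 f4.
have K : mm * A1 * U / 2 <= nn * al * c * 2 `^ (al - 1) * U.
  have f5 : 0 <= al by exact: ltW al0.
  have f6 : al * (nn * c * V) <= al * (nn * c * (2 `^ (al - 1) * U)).
    exact: ler_wpM2l.
  have E1 : mm * (A1 * U) = mm * A1 * U by ring.
  nra.
have U0 : 0 < U by rewrite powR_gt0.
rewrite /beta; rewrite -(ler_pM2r U0); lra.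
Qed.

Lemma beta_ge2 : 2 <= beta.
Proof.
rewrite /beta.
have h : 1 <= 2 `^ (al - 1).
  rewrite -[X in X <= _](powRr0 2); apply: ler_powR; first lra.
  have := al1; lra.
have := al1; have := powR_ge0 2 (al - 1); nra.
Qed.

Lemma AA1 : AA 1 = s i.
Proof. by rewrite /AA /TT divr1 addn1 big_nat1. Qed.

Lemma chain M F K :
  (forall m, (0 < m)%N -> (m <= M)%N -> QQ m <= m%:R * (AA m + c) `^ al) ->
  1 <= F -> 2 * beta * c * F * rho ^+ K < s i ->
  forall k, (k <= K)%N -> forall m', (0 < m')%N -> (m' <= M)%N ->
    m'%:R <= F ^+ k -> s i <= rho ^+ k * AA m'.
Proof.
move=> W F1 big.
have r1 := rho_ge1; have r0 : 0 < rho by exact: lt_le_trans r1.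
have b2 := beta_ge2.
have F0 : 0 < F by exact: lt_le_trans F1.
have Dp : 0 < s i.
  apply: le_lt_trans big.
  have b0 : 0 <= beta by exact: le_trans b2.
  have := exprn_gt0 K r0; move: (rho ^+ K) => rK rK0.
  apply: mulr_ge0; last exact: ltW.
  apply: mulr_ge0; last exact: ltW.
  apply: mulr_ge0; last exact: ltW.
  exact: mulr_ge0.
elim=> [|k IH] kK m' m'0 m'M m'F.
  rewrite expr0 mul1r.
  have -> : m' = 1%N.
    apply/eqP; rewrite eqn_leq m'0 andbT -(ler_nat R); by rewrite expr0 in m'F.
  by rewrite AA1.
have kK' : (k <= K)%N by exact: ltnW.
have rkK : rho ^+ k <= rho ^+ K by apply: ler_weXn2l.
have rk0 : 0 < rho ^+ k by exact: exprn_gt0.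
have Fk1 : 1 <= F ^+ k by exact: exprn_ege1.
have [m'Fk|Fkm'] := leP (m'%:R) (F ^+ k).
  apply: (le_trans (IH kK' m' m'0 m'M m'Fk)).
  rewrite exprSr -mulrA; apply: ler_wpM2l; first exact: ltW.
  rewrite -[X in X <= _]mul1r; apply: ler_wpM2r => //; exact: AA_ge0.
pose m := Num.truncn (F ^+ k).
have m0 : (0 < m)%N by rewrite truncn_gt0.
have mF : m%:R <= F ^+ k by rewrite truncn_le (le_trans _ Fk1).
have Fm : F ^+ k < m.+1%:R by exact: truncnS_gt.
have mm' : (m < m')%N by rewrite -(ltr_nat R); exact: le_lt_trans Fkm'.
have mM : (m <= M)%N by exact: leq_trans (ltnW mm') m'M.
have IHm := IH kK' m m0 mM mF.
rewrite leNgt; apply/negP => contra.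
have cA : c <= AA m.
  rewrite -(ler_pM2l rk0); apply: le_trans IHm; apply: ltW; apply: le_lt_trans big.
  have : c * rho ^+ k <= c * rho ^+ K by apply: ler_wpM2l => //; exact: ltW.
  have : c * rho ^+ K <= 2 * beta * c * F * rho ^+ K.
    have := exprn_gt0 K r0; move: (rho ^+ K) => rK rK0.
    have h : 1 <= 2 * beta * F by nra.
    have := mulr_gt0 c0 rK0; nra.
  rewrite mulrC; lra.
have rA : rho * AA m' <= AA m.
  rewrite -(ler_pM2l rk0); apply: ltW; apply: lt_le_trans IHm.
  by rewrite mulrA -exprSr.
have R1 := @rel m m' m0 mm' cA rA (W m' m'0 m'M).
have e1 : F ^+ k * s i <= 2 * m%:R * (rho ^+ k * AA m).
  have h2m : F ^+ k <= 2 * m%:R.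
    have : (1 <= m)%N by [].
    rewrite -(ler_nat R) => h1; rewrite -addn1 natrD in Fm; lra.
  apply: le_trans (_ : 2 * m%:R * s i <= _).
    apply: ler_wpM2r => //; exact: ltW.
  apply: ler_wpM2l => //; by rewrite mulr_ge0.
have e2 : 2 * m%:R * (rho ^+ k * AA m) <= 2 * rho ^+ k * (beta * c * F ^+ k.+1).
  have : m%:R * AA m <= beta * c * F ^+ k.+1.
    apply: le_trans R1 _; apply: ler_wpM2l => //.
    by rewrite mulr_ge0 // ltW // (lt_le_trans _ b2).
  have := ltW rk0; nra.
have e3 : s i <= 2 * beta * c * F * rho ^+ k.
  rewrite -(ler_pM2l (lt_le_trans ltr01 Fk1)).
  apply: (le_trans e1); apply: (le_trans e2); rewrite exprSr.
  by rewrite le_eqVlt; apply/orP; left; apply/eqP; ring.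
have : 2 * beta * c * F * rho ^+ k <= 2 * beta * c * F * rho ^+ K.
  apply: ler_wpM2l => //.
  have b0 : 0 <= beta by exact: le_trans b2.
  apply: mulr_ge0; last exact: ltW.
  apply: mulr_ge0; last exact: ltW.
  exact: mulr_ge0.
lra.
Qed.

Lemma bmain M F K : (0 < M)%N ->
  (forall m, (0 < m)%N -> (m <= M)%N -> QQ m <= m%:R * (AA m + c) `^ al) ->
  QQ M <= M%:R * c `^ al -> 1 <= F -> M%:R <= F ^+ K ->
  s i <= 2 * beta * c * F * rho ^+ K.
Proof.
move=> M0 W S F1 MF.
rewrite leNgt; apply/negP => big.
have := @chain M F K W F1 big K (leqnn K) M M0 (leqnn M) MF => h.
have AMc : AA M <= c.
  rewrite leNgt; apply/negP => cA.
  have : c `^ al < AA M `^ al.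
    apply: gt0_ltr_powR => //; [exact: al0 | by rewrite nnegrE ltW | by rewrite nnegrE AA_ge0].
  have := @jensen M M0; have M0' : 0 < (M%:R : R) by rewrite ltr0n.
  move=> J cl; have : M%:R * c `^ al < M%:R * AA M `^ al by rewrite ltr_pM2l.
  lra.
have r0 : 0 < rho by exact: lt_le_trans rho_ge1.
have rK := exprn_gt0 K r0.
have : rho ^+ K * AA M <= rho ^+ K * c by apply: ler_wpM2l => //; exact: ltW.
have b2 := beta_ge2.
have : c * rho ^+ K <= 2 * beta * c * F * rho ^+ K.
  move: (rho ^+ K) rK => rK rK0.
  have h2 : 1 <= 2 * beta * F by nra.
  have := mulr_gt0 c0 rK0; nra.
rewrite mulrC; lra.
Qed.

End B.
End S.

Section A.
Variables (R : realType) (d : nat) (L : R) (w : config R d).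
Hypothesis L0 : 0 < L.

Lemma floor_bnds (u : R) : L * (Num.floor (u / L))%:~R <= u < L * (Num.floor (u / L))%:~R + L.
Proof.
have h1 : (Num.floor (u / L))%:~R <= u / L by exact: Num.Theory.floor_le.
have h2 : u / L < (Num.floor (u / L) + 1)%:~R.
  by rewrite -Num.Theory.floor_lt_int ltrDl.
rewrite rmorphD /= in h2.
move: h1 h2; move: ((Num.floor (u / L))%:~R) => z h1 h2.
have e : u = L * (u / L) by rewrite mulrC divfK // gt_eqF.
apply/andP; split.
  by rewrite [X in _ <= X]e ler_wpM2l // ltW.
rewrite [X in X < _]e -[X in _ + X]mulr1 -mulrDr ltr_pM2l //.
Qed.

Lemma box k (t : pt R d) : exists y, augment L w (k, y) /\ forall j, `|y j - t j| <= L.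
Proof.
pose z := fun j => Num.floor (t j / L).
have zb j : L * (z j)%:~R <= t j < L * (z j)%:~R + L by exact: floor_bnds.
case: (pselect (exists y, w (k, y) /\ in_box L z y)) => [[y [wy iy]]|nb].
  exists y; split; first by left.
  move=> j; have := zb j; have := iy j.
  move: (L * (z j)%:~R) => zz /andP[a1 a2] /andP[b1 b2].
  rewrite ler_norml; apply/andP; split; lra.
exists (corner L z); split.
  by right; exists z; split.
move=> j; have := zb j; rewrite /corner.
move: (L * (z j)%:~R) => zz /andP[b1 b2].
rewrite ler_norml; apply/andP; split; lra.
Qed.


Definition close (y t : pt R d) := forall j, `|y j - t j| <= L.

Lemma l1_ge0 (v : pt R d) : 0 <= l1 v.
Proof. by apply: sumr_ge0 => j _. Qed.

Lemma step_ge0 (x : nat -> pt R d) k : 0 <= step x k.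
Proof. exact: l1_ge0. Qed.

Lemma step_close (y t : nat -> pt R d) k : close (y k.-1) (t k.-1) -> close (y k) (t k) ->
  step y k <= l1 (fun j => t k.-1 j - t k j) + d%:R * (2 * L).
Proof.
move=> h1 h2; rewrite /step /l1.
have -> : d%:R * (2 * L) = \sum_(j < d) (2 * L).
  by rewrite sumr_const card_ord mulr_natl.
rewrite -big_split /=; apply: ler_sum => j _.
have := h1 j; have := h2 j.
move: (y k.-1 j) (y k j) (t k.-1 j) (t k j) => a b u v ha hb.
have : `|a - b| <= `|a - u| + `|u - v| + `|v - b|.
  have -> : a - b = (a - u) + (u - v) + (v - b) by ring.
  apply: (le_trans (ler_normD _ _)); apply: lerD => //; exact: ler_normD.
rewrite distrC in ha; lra.
Qed.

Lemma triangle (x : nat -> pt R d) a b : (a <= b)%N ->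
  l1 (fun j => x b j - x a j) <= \sum_(a.+1 <= k < b.+1) step x k.
Proof.
elim: b => [|b IH].
  rewrite leqn0 => /eqP ->; rewrite big_geq // /l1.
  by rewrite big1 // => j _; rewrite subrr normr0.
rewrite leq_eqVlt => /orP[/eqP <-|ab].
  by rewrite big_geq // /l1 big1 // => j _; rewrite subrr normr0.
rewrite big_nat_recr /=; last exact: ab.
apply: (le_trans _ (lerD (IH ab) (lexx _))).
rewrite /step /l1 -big_split /=; apply: ler_sum => j _.
have -> : x b.+1 j - x a j = (x b j - x a j) + (x b j - x b.+1 j) * (-1) by ring.
apply: (le_trans (ler_normD _ _)); rewrite normrM normrN1 mulr1 //.
Qed.

Variables (n : nat) (al : R) (x : nat -> pt R d).
Hypothesis xmin : minimizing (augment L w) n al x.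

Lemma surg (y : nat -> pt R d) a b : admissible (augment L w) n y -> (a <= b <= n)%N ->
  (forall k, (1 <= k <= n)%N -> ~~ (a < k <= b)%N -> step y k = step x k) ->
  \sum_(a.+1 <= k < b.+1) step x k `^ al <= \sum_(a.+1 <= k < b.+1) step y k `^ al.
Proof.
move=> ady /andP[ab bn] Hout.
have := xmin.2 y ady; rewrite /cost.
have an : (a.+1 <= n.+1)%N by rewrite ltnS (leq_trans ab).
have bn' : (b.+1 <= n.+1)%N by rewrite ltnS.
have ab' : (a.+1 <= b.+1)%N by rewrite ltnS.
have sp (f : nat -> R) : \sum_(1 <= k < n.+1) f k = \sum_(1 <= k < a.+1) f k +
   \sum_(a.+1 <= k < b.+1) f k + \sum_(b.+1 <= k < n.+1) f k.
  by rewrite -big_cat_nat // -big_cat_nat.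
rewrite !sp.
have e1 : \sum_(1 <= k < a.+1) step x k `^ al = \sum_(1 <= k < a.+1) step y k `^ al.
  apply: eq_big_nat => k /andP[k1 ka]; rewrite Hout //.
    apply/andP; split; lia.
  apply/negP => /andP [h1 h2]; lia.
have e2 : \sum_(b.+1 <= k < n.+1) step x k `^ al = \sum_(b.+1 <= k < n.+1) step y k `^ al.
  apply: eq_big_nat => k /andP[k1 ka]; rewrite Hout //.
    apply/andP; split; lia.
  apply/negP => /andP [h1 h2]; lia.
rewrite e1 e2 => h; lra.
Qed.

Hypothesis al1 : 1 < al.

Definition bp k t := proj1_sig (cid (box k t)).
Lemma bpP k t : augment L w (k, bp k t) /\ close (bp k t) t.
Proof. exact: (proj2_sig (cid (box k t))). Qed.

Lemma pow_bound (v : R) lo hi (f : nat -> R) : (lo <= hi)%N ->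
  (forall k, (lo <= k < hi)%N -> 0 <= f k <= v) ->
  \sum_(lo <= k < hi) f k `^ al <= (hi - lo)%:R * v `^ al.
Proof.
move=> lh hf; rewrite mulr_natl -sumr_const_nat.
rewrite big_nat_cond [X in _ <= X]big_nat_cond.
apply: ler_sum => k /andP[kr _]; have /andP[f0 fv] := hf k kr.
apply: ge0_ler_powR => //; rewrite ?nnegrE //.
- by rewrite ltW // (lt_trans _ al1).
- exact: le_trans fv.
Qed.

Lemma Wlem a b : (a < b <= n)%N ->
  \sum_(a.+1 <= k < b.+1) step x k `^ al <=
  (b - a)%:R * ((\sum_(a.+1 <= k < b.+1) step x k) / (b - a)%:R + d%:R * (2 * L)) `^ al.
Proof.
move=> /andP[ab bn].
set m := (b - a)%:R; set S := \sum_(_ <= k < _) step x k.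
have m0 : 0 < m by rewrite /m ltr0n subn_gt0.
pose t k := fun j => x a j + ((k - a)%:R / m) * (x b j - x a j).
pose y k := if (a < k < b)%N then bp k (t k) else x k.
have yx k : ~~ (a < k < b)%N -> y k = x k by move=> /negbTE h; rewrite /y h.
have ady : admissible (augment L w) n y.
  split; first by rewrite yx ?xmin.1.1 //.
  move=> k kn; rewrite /y; case: ifP => _; first by have [] := bpP k (t k).
  exact: xmin.1.2.
have cl k : (a <= k <= b)%N -> close (y k) (t k).
  move=> /andP[ak kb].
  have [ka|kna] := eqVneq k a.
    rewrite ka yx; last by rewrite ltnn.
    by move=> j; rewrite /t subnn mul0r mul0r addr0 subrr normr0 ltW.
  have [kb'|knb] := eqVneq k b.
    rewrite kb' yx; last by rewrite ltnn andbF.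
    move=> j; rewrite /t -/m divff ?gt_eqF // mul1r.
    have -> : x b j - (x a j + (x b j - x a j)) = 0 by ring.
    by rewrite normr0 ltW.
  have w1 : (a < k < b)%N by apply/andP; split; lia.
  by rewrite /y w1; have [] := bpP k (t k).
have tS : l1 (fun j => x b j - x a j) <= S by exact: triangle (ltnW ab).
have stepb k : (a < k <= b)%N -> 0 <= step y k <= S / m + d%:R * (2 * L).
  move=> /andP[ak kb]; rewrite step_ge0 /=.
  apply: (le_trans (@step_close y t k (cl k.-1 _) (cl k _))); [apply/andP; split; lia | apply/andP; split; lia |].
  rewrite lerD2r.
  have e : ((k.-1 - a)%:R : R) = (k - a)%:R - 1.
    have -> : (k - a = (k.-1 - a) + 1)%N by lia.
    by rewrite natrD addrK.
  have -> : (fun j => t k.-1 j - t k j) = (fun j => (x b j - x a j) * (- m^-1)).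
    apply: funext => j; rewrite /t e; field; by rewrite -/m gt_eqF.
  have -> : l1 (fun j => (x b j - x a j) * - m^-1) = l1 (fun j => x b j - x a j) / m.
    rewrite /l1 mulr_suml; apply: eq_bigr => j _.
    by rewrite normrM normrN (@ger0_norm _ m^-1) // invr_ge0 ltW.
  by apply: ler_wpM2r; first by rewrite invr_ge0 ltW.
apply: (le_trans (@surg y a b ady _ _)).
- by rewrite (ltnW ab).
- move=> k /andP[k1 kn] kw; rewrite /step !yx //; apply/negP => /andP[h1 h2];
  move/negP: kw; apply; apply/andP; split; lia.
have := @pow_bound (S / m + d%:R * (2 * L)) a.+1 b.+1 (fun k => step y k) (ltnW ab) stepb.
by rewrite subSS.
Qed.

Lemma Slem a : (a <= n)%N ->
  \sum_(a.+1 <= k < n.+1) step x k `^ al <= (n - a)%:R * (d%:R * (2 * L)) `^ al.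
Proof.
move=> an.
pose y k := if (a < k)%N then bp k (x a) else x k.
have yx k : ~~ (a < k)%N -> y k = x k by move=> /negbTE h; rewrite /y h.
have ady : admissible (augment L w) n y.
  split; first by rewrite yx ?xmin.1.1 //.
  move=> k kn; rewrite /y; case: ifP => _; first by have [] := bpP k (x a).
  exact: xmin.1.2.
have cl k : (a <= k)%N -> close (y k) (x a).
  rewrite leq_eqVlt => /orP[/eqP <-|ak].
    by rewrite yx ?ltnn // => j; rewrite subrr normr0 ltW.
  by rewrite /y ak; have [] := bpP k (x a).
have stepb k : (a < k <= n)%N -> 0 <= step y k <= d%:R * (2 * L).
  move=> /andP[ak kb]; rewrite step_ge0 /=.
  apply: (le_trans (@step_close y (fun=> x a) k (cl k.-1 _) (cl k _))); [lia | lia |].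
  rewrite /l1 big1 ?add0r // => j _; by rewrite subrr normr0.
apply: (le_trans (@surg y a n ady _ _)).
- by rewrite an leqnn.
- move=> k /andP[k1 kn] kw; rewrite /step !yx //; apply/negP => h;
  move/negP: kw; apply; apply/andP; split; lia.
have := @pow_bound (d%:R * (2 * L)) a.+1 n.+1 (fun k => step y k) an stepb.
by rewrite subSS.
Qed.

End A.

Lemma aux1 i n m : (0 < i)%N -> (i <= n)%N -> (0 < m)%N -> (m <= n - i + 1)%N ->
  (i.-1 < i.-1 + m <= n)%N.
Proof. move=> *; apply/andP; split; lia. Qed.
Lemma aux2 i m : (0 < i)%N -> (i.-1 + m).+1 = (i + m)%N.
Proof. move=> *; lia. Qed.
Lemma aux3 i n : (0 < i)%N -> (i <= n)%N -> n.+1 = (i + (n - i + 1))%N.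
Proof. move=> *; lia. Qed.
Lemma aux4 i n : (0 < i)%N -> (i <= n)%N -> (n - i.-1)%N = (n - i + 1)%N.
Proof. case: i => // i _ /= h; lia. Qed.
Lemma aux5 i n : (0 < i)%N -> (i <= n)%N -> (n - i + 1 <= n)%N.
Proof. move=> *; lia. Qed.

Theorem lemma3 (R : realType) (d : nat) (alpha p : R) :
  (1 <= d)%N -> 1 < alpha -> 0 < p <= 1 ->
  forall zeta : R, 0 < zeta ->
  exists theta : R, 0 < theta < zeta /\
  exists N : nat, forall n : nat, (N < n)%N ->
  forall w : config R d, realization p w ->
  forall pi : nat -> pt R d,
    minimizing (augment (n%:R `^ theta) w) n alpha pi ->
  forall i : nat, (1 <= i <= n)%N -> step pi i <= n%:R `^ zeta.
Proof.
move=> d1 al1 _ zeta z0.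
exists (zeta / 3); split; first by apply/andP; split; lra.
pose K := (Num.truncn (3 / zeta)).+1.
have K0 : 0 < (K%:R : R) by rewrite ltr0n.
have Kbig : 3 < K%:R * zeta.
  rewrite -ltr_pdivrMr //; exact: truncnS_gt.
have b0 : 0 <= beta R alpha.
  apply: le_trans (beta_ge2 R alpha al1); lra.
have r0 : 0 < rho R alpha by exact: lt_le_trans (rho_ge1 R alpha al1).
pose C := 2 * beta R alpha * (d%:R * 2) * rho R alpha ^+ K.
have C0 : 0 <= C.
  rewrite /C; apply: mulr_ge0; last by rewrite ltW // exprn_gt0.
  apply: mulr_ge0; last by rewrite mulr_ge0.
  by apply: mulr_ge0.
exists (Num.truncn (C `^ (3 / zeta))).
move=> n Nn w _ pi mpi i /andP[i1 iN].
have n1 : 1 <= (n%:R : R) by rewrite ler1n (leq_ltn_trans _ Nn).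
have n0 : 0 < (n%:R : R) by exact: lt_le_trans n1.
set L := n%:R `^ (zeta / 3).
have L0 : 0 < L by rewrite powR_gt0.
pose M := (n - i + 1)%N.
have M0 : (0 < M)%N by rewrite /M addn1.
pose F : R := (n%:R : R) `^ (K%:R^-1).
have F1 : 1 <= F.
  rewrite /F -[X in X <= _](powRr0 (n%:R)); apply: ler_powR => //.
have FK : F ^+ K = n%:R.
  rewrite /F -powR_mulrn ?powR_ge0 // -powRrM mulVf ?powRr1 ?ltW //.
  by rewrite gt_eqF.
have al1' := al1.
have s0 : forall k, 0 <= step pi k by move=> k; exact: step_ge0.
have c0 : 0 < d%:R * (2 * L) by rewrite mulr_gt0 // ?ltr0n // mulr_gt0.
have key := @bmain R alpha (d%:R * (2 * L)) (step pi) i al1 c0 s0 M F K M0.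
have ei : i.-1.+1 = i by rewrite prednK.
have Wh : forall m, (0 < m)%N -> (m <= M)%N ->
    QQ R alpha (step pi) i m <= m%:R * (AA R (step pi) i m + d%:R * (2 * L)) `^ alpha.
  move=> m m0 mM.
  have hab := @aux1 i n m i1 iN m0 mM.
  have := @Wlem R d L w L0 n alpha pi mpi al1 i.-1 (i.-1 + m) hab.
  by rewrite ei (@aux2 i m i1) addKn /QQ /AA /TT.
have Sh : QQ R alpha (step pi) i M <= M%:R * (d%:R * (2 * L)) `^ alpha.
  have := @Slem R d L w L0 n alpha pi mpi al1 i.-1 (leq_trans (leq_pred i) iN).
  by rewrite ei (@aux3 i n i1 iN) (@aux4 i n i1 iN) /QQ.
have MF : M%:R <= F ^+ K by rewrite FK ler_nat /M; exact: (@aux5 i n i1 iN).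
have bnd := key Wh Sh F1 MF.
apply: (le_trans bnd).
have nn0 : (n%:R : R) != 0 by rewrite gt_eqF.
have e1 : 2 * beta R alpha * (d%:R * (2 * L)) * F * rho R alpha ^+ K = C * (L * F).
  by rewrite /C; ring.
rewrite e1.
have LF : L * F = n%:R `^ (zeta / 3 + K%:R^-1).
  by rewrite /L /F powRD //; apply/implyP => _.
have Kinv : K%:R^-1 <= zeta / 3.
  rewrite -div1r ler_pdivrMr //; lra.
have h1 : L * F <= n%:R `^ (zeta / 3 * 2).
  rewrite LF; apply: ler_powR => //; lra.
have Cn : C <= n%:R `^ (zeta / 3).
  have h2 : C `^ (3 / zeta) <= n%:R.
    apply: ltW; apply: (lt_le_trans (truncnS_gt _)); rewrite ler_nat; exact: Nn.
  have := @powR_mono R (zeta / 3) _ _ (ltW (divr_gt0 z0 (ltr0Sn R 2))) (powR_ge0 _ _) h2.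
  rewrite -powRrM.
  have -> : 3 / zeta * (zeta / 3) = 1 by field; rewrite gt_eqF.
  by rewrite powRr1.
have hz : n%:R `^ zeta = n%:R `^ (zeta / 3) * n%:R `^ (zeta / 3 * 2).
  rewrite -powRD; last by apply/implyP => _.
  by congr (_ `^ _); field.
rewrite hz; apply: ler_pM => //.
by apply: mulr_ge0; [exact: ltW | exact: le_trans F1].
Qed.
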